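(* For $n\ge2$ and all $P,Q\in\Gamma_n$, $\frac18 J(P\|Q)\le T(P\|Q)$.
   Context: $\Gamma_n=\{P=(p_1,\dots,p_n): p_i>0,\ \sum p_i=1\}$. $J(P\|Q)=\sum_{i=1}^n(p_i-q_i)\ln\frac{p_i}{q_i}$; $T(P\|Q)=\sum_{i=1}^n\frac{p_i+q_i}{2}\ln\frac{p_i+q_i}{2\sqrt{p_iq_i}}$ (natural logarithm). *)

(* Defs.v *)
From mathcomp Require Import all_boot all_order all_algebra.
From mathcomp Require Import all_classical all_reals.
From mathcomp Require Import exp.
Import Order.TTheory GRing.Theory Num.Theory.
Local Open Scope ring_scope.

Definition in_Gamma {R : realType} (n : nat) (P : 'I_n -> R) : Prop :=
  (forall i, 0 < P i) /\ \sum_(i < n) P i = 1.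

Definition Jdiv {R : realType} (n : nat) (P Q : 'I_n -> R) : R :=
  \sum_(i < n) (P i - Q i) * ln (P i / Q i).

Definition Tdiv {R : realType} (n : nat) (P Q : 'I_n -> R) : R :=
  \sum_(i < n) (P i + Q i) / 2 * ln ((P i + Q i) / (2 * Num.sqrt (P i * Q i))).

(* Main.v *)
Require Import Defs.
From mathcomp Require Import all_boot all_order all_algebra.
From mathcomp Require Import all_classical all_reals.
From mathcomp Require Import exp.
From mathcomp Require Import realfun derive topology normedtype.
From mathcomp Require Import ring lra.
Import Order.TTheory GRing.Theory Num.Theory.
Import numFieldNormedType.Exports.
Local Open Scope ring_scope.

Section S.
Variable R : realType.

Lemma is_derive_lnc (f : R -> R) x df : 0 < f x -> is_derive x 1 f df ->
  is_derive x 1 (fun y => ln (f y)) (df / f x).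
Proof.
move=> fx0 H.
have := is_derive1_comp (is_derive1_ln fx0) H.
by rewrite mulrC.
Qed.

Definition Kf (y : R) := 2^-1 * (y - y^-1) - ln y.

Lemma K_deriv (y : R) : 0 < y -> is_derive y 1 Kf ((1 + y^-2)/2 - y^-1).
Proof.
move=> y0.
have h1 : is_derive y 1 (fun y : R => y^-1) (- y ^- 2 *: 1).
  by apply: is_deriveV; rewrite gt_eqF.
have h2 := is_derive1_ln y0.
have h3 := is_deriveB (is_derive_id y 1) h1.
have h4 := is_deriveZ (2^-1) h3.
have h5 := is_deriveB h4 h2.
apply: (is_derive_eq h5).
by rewrite /GRing.scale /= mulr1 opprK mulrC.
Qed.

Lemma K_ge0 (y : R) : 1 <= y -> ln y <= (y - y^-1)/2.
Proof.
move=> y1.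
have : Kf 1 <= Kf y.
  apply: (@ger0_derive1_ndecry R Kf 1) => //.
  - move=> x; rewrite in_itv /= andbT => x1.
    by case: (K_deriv _ (lt_trans ltr01 x1)).
  - move=> x; rewrite in_itv /= andbT => x1.
    have x0 := lt_trans ltr01 x1.
    rewrite derive1E; have [_ ->] := K_deriv _ x0.
    have -> : (1 + x ^- 2) / 2 - x^-1 = (1 - x^-1)^+2 / 2.
      by field; rewrite gt_eqF.
    by rewrite divr_ge0 // sqr_ge0.
  - apply: derivable_within_continuous => x; rewrite in_itv /= andbT => x1.
    by case: (K_deriv _ (lt_le_trans ltr01 x1)).
rewrite /Kf invr1 subrr mulr0 ln1 subr0 subr_ge0.
by rewrite mulrC.
Qed.


Definition Ff (x : R) := ln (x^+2 + 1) - ln 2 - 3/2 * ln x + ln x * (x^+2 + 1)^-1.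

Lemma F_deriv (x : R) : 0 < x ->
  is_derive x 1 Ff (2 * x / (x^+2 + 1) - 3 / 2 / x + (x^-1 / (x^+2+1) - ln x * (2 * x / (x^+2+1)^+2))).
Proof.
move=> x0.
have q0 : 0 < x^+2 + 1 by rewrite ltr_pwDr // sqr_ge0.
have hq : is_derive x 1 (fun y : R => y^+2 + 1) (2 * x).
  apply: is_derive_eq.
  by rewrite /GRing.scale /=; ring.
have h1 := @is_derive_lnc (fun y : R => y^+2 + 1) x (2*x) q0 hq.
have hqi : is_derive x 1 (fun y : R => (y^+2 + 1)^-1) (- (x^+2+1) ^- 2 *: (2 * x)).
  by apply: is_deriveV => //; rewrite gt_eqF.
have h2 := is_derive1_ln x0.
have h3 := is_deriveB h1 (is_derive_cst (ln (2:R)) x 1).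
have h4 := is_deriveB h3 (is_deriveZ (3/2) h2).
have h5 := is_deriveD h4 (is_deriveM h2 hqi).
apply: (is_derive_eq h5).
rewrite /GRing.scale /=.
by field; rewrite !gt_eqF.
Qed.

Lemma F_ge0 (x : R) : 1 <= x -> 0 <= Ff x.
Proof.
move=> x1.
have : Ff 1 <= Ff x.
  apply: (@ger0_derive1_ndecry R Ff 1) => //.
  - move=> y; rewrite in_itv /= andbT => y1.
    by case: (F_deriv _ (lt_trans ltr01 y1)).
  - move=> y; rewrite in_itv /= andbT => y1.
    have y0 := lt_trans ltr01 y1.
    rewrite derive1E; have [_ ->] := F_deriv _ y0.
    have y2 : 1 <= y^+2 by rewrite expr2; nra.
    have hK := K_ge0 _ y2.
    rewrite lnXn // in hK.
    set L := ln y in hK *.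
    have q0 : 0 < y^+2 + 1 by rewrite ltr_pwDr // sqr_ge0.
    have -> : 2 * y / (y ^+ 2 + 1) - 3 / 2 / y + (y^-1 / (y ^+ 2 + 1) - L * (2 * y / (y ^+ 2 + 1) ^+ 2))
       = (y / (y^+2 + 1)^+2) * ((y ^+ 2 - (y ^+ 2)^-1) / 2 - 2 * L).
      by field; rewrite !gt_eqF.
    apply: mulr_ge0; last by rewrite mulr2n in hK; lra.
    by rewrite divr_ge0 ?exprn_ge0 ?ltW.
  - apply: derivable_within_continuous => y; rewrite in_itv /= andbT => y1.
    by case: (F_deriv _ (lt_le_trans ltr01 y1)).
suff -> : Ff 1 = 0 by [].
by rewrite /Ff ln1 expr1n mul0r addr0 mulr0 subr0 subrr.
Qed.


Lemma term_x (x b : R) : 1 <= x -> 0 < b ->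
  (x^+2*b - b) * ln (x^+2*b / b) / 8 <=
  (x^+2*b + b) / 2 * ln ((x^+2*b + b) / (2 * Num.sqrt (x^+2*b*b))).
Proof.
move=> x1 b0.
have x0 : 0 < x by exact: lt_le_trans ltr01 x1.
have q0 : 0 < x^+2 + 1 by rewrite ltr_pwDr // sqr_ge0.
have -> : x^+2*b*b = (x*b)^+2 by ring.
rewrite sqrtr_sqr ger0_norm; last by rewrite mulr_ge0 // ltW.
have -> : x^+2*b / b = x^+2 by field; rewrite gt_eqF.
have -> : (x^+2*b + b) / (2 * (x*b)) = (x^+2 + 1) / (2 * x) by field; rewrite !gt_eqF.
rewrite lnXn // ln_div ?posrE ?mulr_gt0 // lnM ?posrE //.
have hF := F_ge0 _ x1; rewrite /Ff in hF.
set L1 := ln (x^+2 + 1) in hF *; set L2 := ln 2 in hF *; set L := ln x in hF *.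
rewrite -subr_ge0.
have -> : (x ^+ 2 * b + b) / 2 * (L1 - (L2 + L)) - (x ^+ 2 * b - b) * (L *+ 2) / 8
  = ((x^+2 + 1) * b / 2) * (L1 - L2 - 3 / 2 * L + L * (x ^+ 2 + 1)^-1).
  by rewrite mulr2n; field; rewrite gt_eqF.
by rewrite mulr_ge0 // divr_ge0 // mulr_ge0 // ltW.
Qed.

Lemma term (a b : R) : 0 < a -> 0 < b ->
  (a - b) * ln (a / b) / 8 <= (a + b) / 2 * ln ((a + b) / (2 * Num.sqrt (a * b))).
Proof.
wlog ba : a b / b <= a.
  move=> H a0 b0; have [/H|ab] := leP b a; first exact.
  have h := H b a (ltW ab) b0 a0.
  rewrite (addrC b a) (mulrC b a) in h.
  have e : ln (b / a) = - ln (a / b).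
    by rewrite -lnV ?posrE ?divr_gt0 // invf_div.
  by rewrite e mulrN -mulNr opprB in h.
move=> a0 b0.
set x := Num.sqrt (a / b).
have ea : a = x^+2 * b by rewrite sqr_sqrtr ?divr_ge0 ?ltW // divfK // gt_eqF.
have x1 : 1 <= x.
  have h : 1 <= a / b by rewrite ler_pdivlMr // mul1r.
  by rewrite /x -sqrtr1 ler_sqrt // (le_trans ler01 h).
clearbody x; subst a.
exact: term_x.
Qed.

End S.

Theorem proposition3p4 (R : realType) (n : nat) (hn : (2 <= n)%N)
  (P Q : 'I_n -> R) (hP : in_Gamma n P) (hQ : in_Gamma n Q) :
  Jdiv n P Q / 8 <= Tdiv n P Q.
Proof.
rewrite /Jdiv /Tdiv mulr_suml; apply: ler_sum => i _.
exact: term (hP.1 i) (hQ.1 i).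
Qed.
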